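(* Let $k\ge2$ be even, $\alpha_1,\dots,\alpha_k$ positive integers, $G=C(\alpha_1,\dots,\alpha_k)$, and let $m(G)$ be the number of distinct Laplacian eigenvalues of $G$. Then $k\le m(G)\le 2k-1$.
   Context: $C(\alpha_1,\dots,\alpha_k)$ is defined recursively by $C(\alpha_1)=\overline{K_{\alpha_1}}$ (edgeless graph) and $C(\alpha_1,\dots,\alpha_i)=\overline{C(\alpha_1,\dots,\alpha_{i-1})\cup K_{\alpha_i}}$ for $i=2,\dots,k$ (disjoint union, then complement). Equivalently for $k$ even, with $\pi_i$ the $\alpha_i$ vertices introduced at step $i$: $\pi_i$ is a clique for $i$ odd, independent for $i$ even, and for $i<j$ vertices of $\pi_i,\pi_j$ are adjacent iff $j$ is even. Laplacian eigenvalues are those of $L=D-A$. *)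

(* Defs.v *)
From HB Require Import structures.
From mathcomp Require Import all_boot all_order all_algebra all_field.
Set Implicit Arguments. Unset Strict Implicit. Unset Printing Implicit Defensive.
Import Order.TTheory GRing.Theory Num.Theory.
Local Open Scope ring_scope.

(* Vertex set of C(alpha_1,...,alpha_k): the vertex (i, j) is the j-th vertex
   of the block pi_{i+1} (blocks are 0-indexed here: i : 'I_k stands for
   pi_{i+1}). *)
Definition Cvert (k : nat) (alpha : 'I_k -> nat) : finType :=
  {i : 'I_k & 'I_(alpha i)}.

(* Adjacency of C(alpha_1,...,alpha_k) for k even (explicit description):
   pi_i is a clique for i odd, independent for i even; for i < j, vertices of
   pi_i, pi_j are adjacent iff j is even.  With 0-based block index b = i-1:
   block b is a clique iff b is even; across blocks b < b', adjacent iff b' is odd. *)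
Definition Cadj (k : nat) (alpha : 'I_k -> nat) : rel (Cvert alpha) :=
  fun u v =>
    (u != v) &&
    (if tag u == tag v then ~~ odd (tag u)
     else odd (maxn (tag u) (tag v))).

Definition laplacian (V : finType) (e : rel V) : 'M[algC]_#|V| :=
  \matrix_(i, j)
    (if i == j then (#|[set z | e (enum_val i) z]|)%:R
     else - ((e (enum_val i) (enum_val j)) : nat)%:R).

Definition num_distinct_eigenvalues (n : nat) (A : 'M[algC]_n) (m : nat) : Prop :=
  exists s : seq algC,
    [/\ uniq s, forall a, eigenvalue A a = (a \in s) & size s = m].

(* Main.v *)
Require Import Defs.
From HB Require Import structures.
From mathcomp Require Import all_boot all_order all_algebra all_field.
From mathcomp Require Import zify ring lra.
Set Implicit Arguments. Unset Strict Implicit. Unset Printing Implicit Defensive.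
Import Order.TTheory GRing.Theory Num.Theory.
Local Open Scope ring_scope.

Section S.
Variable k : nat.
Variable alpha : 'I_k -> nat.
Hypothesis apos : forall i, (0 < alpha i)%N.
Local Notation V := (Cvert alpha).
Local Notation adj := (@Cadj k alpha).

Definition al (b : nat) : nat := if insub b is Some j then alpha j else 0%N.
Lemma alE (j : 'I_k) : al j = alpha j.
Proof. by rewrite /al valK. Qed.
Lemma al_out b : (k <= b)%N -> al b = 0%N.
Proof. by move=> h; rewrite /al insubF // ltnNge h. Qed.
Lemma al_pos b : (b < k)%N -> (0 < al b)%N.
Proof. by move=> h; rewrite -[b]/(val (Ordinal h)) alE. Qed.

Definition nn (r : nat) : nat := (\sum_(b < r) al b)%N.
Lemma nnS r : nn r.+1 = (nn r + al r)%N.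
Proof. by rewrite /nn big_ord_recr. Qed.

Definition tg (u : V) : nat := tag u.
Definition F (f : V -> algC) (b : nat) : algC := \sum_(w | tg w == b) f w.
Definition cc (a b : nat) : bool := if a == b then ~~ odd a else odd (maxn a b).

Lemma adjE u w : adj u w = (u != w) && cc (tg u) (tg w).
Proof. by []. Qed.

Lemma adj_sym u w : adj u w = adj w u.
Proof. rewrite !adjE /cc (eq_sym w u) (eq_sym (tg w)) maxnC; case: (u =P w) => [->|_] //=; by case: eqP => [->|].
Qed.

Lemma sum_block_const b (c : algC) :
  \sum_(w : V | tg w == b) c = (al b)%:R * c.
Proof.
case: (ltnP b k) => hb.
  pose j := Ordinal hb.
  have -> : \sum_(w : V | tg w == b) c = \sum_(w in tagged_with (fun i => 'I_(alpha i)) j) c.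
    by apply: eq_bigl => w; rewrite /tg inE -val_eqE.
  transitivity (\sum_(w in tagged_with (fun i => 'I_(alpha i)) j)
                  untag 0 (fun _ : 'I_(alpha j) => c) w).
    by apply: eq_bigr => w /eqP e; rewrite (untagE _ _ e).
  have := big_tag (R:=algC) (op := +%R) (fun i (_ : 'I_(alpha i)) => c) j.
  rewrite /= => <-.
  by rewrite sumr_const card_ord -[b]/(val j) alE mulr_natl.
rewrite al_out // mul0r big_pred0 // => w; apply/negbTE/eqP => e.
by have := ltn_ord (tag w); rewrite -/(tg w) e ltnNge hb.
Qed.

Lemma block_split (G : V -> algC) r :
  \sum_(w | (tg w < r)%N) G w = \sum_(b < r) \sum_(w | tg w == b) G w.
Proof.
rewrite (exchange_big_dep (fun w => (tg w < r)%N)) /=; last first.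
  by move=> b w _ /eqP ->.
apply: eq_bigr => w h.
by rewrite (big_pred1 (Ordinal h)) // => b; rewrite /= eq_sym -val_eqE.
Qed.

Lemma sum_block (f : V -> algC) b (x y : algC) :
  \sum_(w | tg w == b) (x * f w - y) = x * F f b - (al b)%:R * y.
Proof. by rewrite sumrB -mulr_sumr sum_block_const. Qed.

Definition Lr (r : nat) (f : V -> algC) (u : V) : algC :=
  \sum_(b < r) (cc (tg u) b)%:R * ((al b)%:R * f u - F f b).

Lemma LrE r f u :
  \sum_(w | (tg w < r)%N) (adj u w)%:R * (f u - f w) = Lr r f u.
Proof.
rewrite block_split; apply: eq_bigr => b _.
rewrite -[(al b)%:R * f u](sum_block_const b (f u)) /F -sumrB mulr_sumr.
apply: eq_bigr => w /eqP e; rewrite adjE -e.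
by case: (u =P w) => [->|_]; rewrite ?subrr ?mulr0.
Qed.

Lemma sum_Lr r f : \sum_(u | (tg u < r)%N) Lr r f u = 0.
Proof.
set S := (X in X = 0).
have : S = - S.
  have -> : S = \sum_(u | (tg u < r)%N) \sum_(w | (tg w < r)%N) (adj u w)%:R * (f u - f w).
    by apply: eq_bigr => u _; rewrite LrE.
  rewrite [in LHS]exchange_big -sumrN; apply: eq_bigr => u _; rewrite -sumrN; apply: eq_bigr => w _.
  by rewrite adj_sym -mulrN opprB.
move/eqP; rewrite -subr_eq0 opprK -mulr2n -mulr_natr mulf_eq0 pnatr_eq0 orbF.
by move/eqP.
Qed.

Lemma deg_sum (e : V) : (#|[set y | adj e y]|%:R : algC) = \sum_y (adj e y)%:R.
Proof.
rewrite cardsE -sum1_card natr_sum big_mkcond /=.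
by apply: eq_bigr => y _; rewrite [in LHS]unfold_in /Cadj; case: ifP.
Qed.

Lemma adj_irr u : adj u u = false.
Proof. by rewrite adjE eqxx. Qed.

Lemma lap_row (v : 'rV[algC]_#|V|) j :
  (v *m laplacian adj) 0 j =
  \sum_(w : V) (adj (enum_val j) w)%:R *
     (v 0 (enum_rank (enum_val j)) - v 0 (enum_rank w)).
Proof.
rewrite !mxE (reindex (@enum_rank V)); last by apply: onW_bij; exact: enum_rank_bij.
set e := enum_val j; rewrite -[j]enum_valK -/e.
pose fv : V -> algC := fun z => v 0 (enum_rank z).
rewrite -/(fv e).
transitivity (\sum_z fv z * (if z == e then #|[set y | adj e y]|%:R else - (adj z e)%:R)).
  apply: eq_bigr => z _; rewrite mxE enum_rankK (inj_eq (can_inj enum_rankK)) -/(fv z).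
  by rewrite enum_rankK; case: eqP => [->|].
rewrite (bigD1 e) //= eqxx deg_sum.
under eq_bigr => z hz do rewrite (negbTE hz) adj_sym.
rewrite [in RHS](bigD1 e) //= adj_irr mul0r add0r.
rewrite (bigD1 e (P := predT) (F := fun y => (adj e y)%:R)) //= adj_irr add0r.
rewrite mulr_sumr -big_split /=; apply: eq_bigr => z hz.
by rewrite mulrN mulrBr; congr (_ - _); exact: mulrC.
Qed.

Lemma LkE f u : Lr k f u = \sum_w (adj u w)%:R * (f u - f w).
Proof. by rewrite -LrE; apply: eq_bigl => w; rewrite /tg ltn_ord. Qed.

Lemma eigE a : eigenvalue (laplacian adj) a <->
  exists f : V -> algC, (exists u, f u != 0) /\ forall u, Lr k f u = a * f u.
Proof.
split.
  move/eigenvalueP => [v hv nz].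
  pose f : V -> algC := fun z => v 0 (enum_rank z).
  exists f; split.
    case: (pickP (fun u => f u != 0)) => [u hu|h]; first by exists u.
    case/eqP: nz; apply/rowP => i; rewrite [RHS]mxE.
    have := h (enum_val i); rewrite /f enum_valK.
    by move/negbT; rewrite negbK => /eqP.
  move=> u; rewrite LkE.
  have := congr1 (fun M : 'M[algC]_(1, #|V|) => M 0 (enum_rank u)) hv.
  by rewrite /= lap_row enum_rankK mxE => ->.
move=> [f [[u hu] h]]; apply/eigenvalueP; exists (\row_i f (enum_val i)).
  apply/rowP => j; rewrite lap_row !mxE enum_rankK.
  under eq_bigr do rewrite !mxE !enum_rankK.
  by rewrite -LkE h.
apply/eqP => h0; have := congr1 (fun M : 'M[algC]_(1, #|V|) => M 0 (enum_rank u)) h0.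
by rewrite /= !mxE enum_rankK; apply/eqP.
Qed.

Lemma cc_lt a b : (a < b)%N -> cc a b = odd b.
Proof. by move=> h; rewrite /cc ltn_eqF // (maxn_idPr (ltnW h)). Qed.
Lemma cc_gt a b : (b < a)%N -> cc a b = odd a.
Proof. by move=> h; rewrite /cc gtn_eqF // (maxn_idPl (ltnW h)). Qed.
Lemma cc_eq a : cc a a = ~~ odd a.
Proof. by rewrite /cc eqxx. Qed.

Lemma sumF_nn r (x : algC) f :
  \sum_(b < r) ((al b)%:R * x - F f b) = (nn r)%:R * x - \sum_(b < r) F f b.
Proof. by rewrite sumrB -mulr_suml /nn natr_sum. Qed.

Lemma L_top r f u : ~~ odd r -> tg u = r.+1 ->
  Lr r.+2 f u = (nn r.+1)%:R * f u - \sum_(b < r.+1) F f b.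
Proof.
move=> hr hu; rewrite /Lr big_ord_recr /= hu cc_eq /= hr /= mul0r addr0 -sumF_nn.
by apply: eq_bigr => b _; rewrite cc_gt //= ?hr ?mul1r // ltnS ltnW.
Qed.

Lemma L_mid r f u : ~~ odd r -> tg u = r ->
  Lr r.+2 f u = ((al r)%:R + (al r.+1)%:R) * f u - F f r - F f r.+1.
Proof.
move=> hr hu; rewrite /Lr !big_ord_recr /= hu cc_eq cc_lt // /= hr /= !mul1r.
rewrite big1 ?add0r; first by rewrite mulrDl; ring.
by move=> b _; rewrite cc_gt //= (negbTE hr) mul0r.
Qed.

Lemma L_low r f u : ~~ odd r -> (tg u < r)%N ->
  Lr r.+2 f u = Lr r f u + (al r.+1)%:R * f u - F f r.+1.
Proof.
move=> hr hu; rewrite /Lr !big_ord_recr /= cc_lt // cc_lt ?(ltn_trans hu) //= hr.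
by rewrite (negbTE hr) mul0r addr0 mul1r addrA.
Qed.

Fixpoint cl (t : nat) : seq nat :=
  if t is t'.+1 then
    [:: 0%N; nn t'.*2.+2] ++ (if (1 < al t'.*2.+1)%N then [:: nn t'.*2.+1] else [::])
    ++ (if (0 < t')%N && (1 < al t'.*2)%N then [:: (al t'.*2 + al t'.*2.+1)%N] else [::])
    ++ map (addn (al t'.*2.+1)) (cl t')
  else [::].

Definition Sc t : seq algC := [seq (x%:R : algC) | x <- cl t].

Lemma in_Sc_step t (mu : algC) : mu \in Sc t.+1 =
  [|| mu == 0, mu == (nn t.*2.+2)%:R,
      ((1 < al t.*2.+1)%N && (mu == (nn t.*2.+1)%:R)),
      [&& (0 < t)%N, (1 < al t.*2)%N & mu == (al t.*2 + al t.*2.+1)%:R]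
    | (mu - (al t.*2.+1)%:R \in Sc t)].
Proof.
rewrite /Sc /= !inE !map_cat !mem_cat.
congr (_ || (_ || (_ || (_ || _)))).
- by case: ifP => _ /=; rewrite ?inE ?in_nil ?orbF.
- case: ifP => /= h; rewrite ?inE ?orbF; first by rewrite andbA h.
  by rewrite in_nil andbA h.
rewrite -map_comp; apply/mapP/mapP => [[x hx ->]|[x hx e]].
  exists x => //=; by rewrite (natrD algC (al t.*2.+1) x) addrAC subrr add0r.
by exists x => //=; rewrite (natrD algC) -e addrC subrK.
Qed.

Lemma card_block b : #|[pred w : V | tg w == b]| = al b.
Proof.
have := sum_block_const b 1; rewrite mulr1.
have -> : \sum_(w : V | tg w == b) (1 : algC) = #|[pred w : V | tg w == b]|%:R.
  by rewrite -sum1_card natr_sum.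
by move/eqP; rewrite eqr_nat => /eqP.
Qed.

Lemma single_block f u : al (tg u) = 1%N -> F f (tg u) = f u.
Proof.
move=> h1; rewrite /F (bigD1 u) //= big_pred0 ?addr0 // => w.
apply/negbTE/negP => /andP[hw hwu].
have := card_block (tg u); rewrite h1 (cardD1 u) inE eqxx add1n => /eqP.
rewrite eqSS => /eqP/card0_eq/(_ w); rewrite !inE hwu /= => /negbT.
by rewrite hw.
Qed.

Lemma F_zero f b : (forall u, tg u = b -> f u = 0) -> F f b = 0.
Proof. by move=> h; apply: big1 => w /eqP /h. Qed.

Lemma vert_ex b : (b < k)%N -> exists u : V, tg u = b.
Proof.
move=> hb; have := apos (Ordinal hb) => ha.
by exists (Tagged (fun i => 'I_(alpha i)) (Ordinal ha)).
Qed.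


Lemma blocksum_top r f (mu : algC) : ~~ odd r ->
  (forall u, (tg u < r.+2)%N -> Lr r.+2 f u = mu * f u) ->
  mu * F f r.+1 = (nn r.+1)%:R * F f r.+1 - (al r.+1)%:R * \sum_(b < r.+1) F f b.
Proof.
move=> hr heq; rewrite -sum_block /F mulr_sumr; apply: eq_bigr => u /eqP hu.
by rewrite -heq ?hu // L_top.
Qed.

Lemma blocksum_mid r f (mu : algC) : ~~ odd r ->
  (forall u, (tg u < r.+2)%N -> Lr r.+2 f u = mu * f u) ->
  mu * F f r = ((al r)%:R + (al r.+1)%:R) * F f r - (al r)%:R * (F f r + F f r.+1).
Proof.
move=> hr heq; rewrite -sum_block /F mulr_sumr; apply: eq_bigr => u /eqP hu.
by rewrite -heq ?hu ?ltnS ?leqnSn // L_mid // -addrA -opprD.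
Qed.

Lemma necess t : (t.*2 <= k)%N -> forall (f : V -> algC) (mu : algC),
  (forall u, (t.*2 <= tg u)%N -> f u = 0) ->
  (forall u, (tg u < t.*2)%N -> Lr t.*2 f u = mu * f u) ->
  (exists u, f u != 0) -> mu \in Sc t.
Proof.
elim: t => [|t IH] hk f mu hsupp heq [u0 hu0].
  by move: hu0; rewrite hsupp ?eqxx.
have hr : ~~ odd t.*2 by rewrite odd_double.
rewrite doubleS in hk hsupp heq.
set r := t.*2 in hk hsupp heq hr *.
have ha1 : (0 < al r.+1)%N by apply: al_pos.
have ha0 : (0 < al r)%N by apply: al_pos; apply: ltnW.
set U := \sum_(b < r) F f b.
set R := F f r. set S := F f r.+1.
have hT : mu * (U + R + S) = 0.
  have := sum_Lr r.+2 f.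
  under eq_bigr => u hu do rewrite heq //.
  by rewrite -mulr_sumr block_split !big_ord_recr.
have h1 := blocksum_top hr heq; rewrite big_ord_recr /= -/U -/R -/S in h1.
have h2 := blocksum_mid hr heq; rewrite -/R -/S in h2.
rewrite in_Sc_step -/r.
have [->|mu0] := eqVneq mu 0; first by rewrite ?eqxx.
have hT0 : U + R + S = 0 by move: hT => /eqP; rewrite mulf_eq0 (negbTE mu0) => /eqP.
have [->|mu1] := eqVneq mu (nn r.+2)%:R; first by rewrite ?eqxx ?orbT.
have hUR : U + R = - S by rewrite -(addrK S (U + R)) hT0 sub0r.
have hS : S = 0.
  have : (mu - (nn r.+2)%:R) * S = 0.
    by rewrite nnS natrD mulrBl h1 hUR; ring.
  by move/eqP; rewrite mulf_eq0 subr_eq0 (negbTE mu1) => /eqP.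
have htop u : tg u = r.+1 -> mu * f u = (nn r.+1)%:R * f u.
  move=> hu; rewrite -heq ?hu // L_top // big_ord_recr /= -/U -/R hUR hS.
  by rewrite oppr0 subr0.
case: (boolP [exists u, (tg u == r.+1) && (f u != 0)]).
  move=> /existsP [u /andP[/eqP hu hfu]].
  have emu : mu = (nn r.+1)%:R by apply: (mulIf hfu); rewrite htop.
  have : (1 < al r.+1)%N.
    rewrite ltn_neqAle ha1 andbT; apply/negP => /eqP e.
    by move: hfu; rewrite -single_block hu -?e // -/S hS eqxx.
  by move=> ->; rewrite emu eqxx orbT.
move=> hnone.
have hz1 u : tg u = r.+1 -> f u = 0.
  move=> hu; apply/eqP; apply: contraNT hnone => hfu.
  by apply/existsP; exists u; rewrite hu eqxx.
have h2' : (mu - (al r.+1)%:R) * R = 0.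
  by rewrite mulrBl h2 hS; ring.
have hmid u : tg u = r -> mu * f u = ((al r)%:R + (al r.+1)%:R) * f u - R.
  by move=> hu; rewrite -heq ?hu // L_mid // -/R -/S hS subr0.
have [mu2|mu2] := eqVneq mu (al r.+1)%:R.
  case: (posnP t) => ht; last first.
    by rewrite mu2 subrr; case: t ht IH @r {hk hsupp heq hr ha1 ha0 U R S hT h1 h2 hT0 hUR hS htop hnone hz1 h2' hmid mu0 mu1 mu2} => // t' _ _; rewrite /Sc /= inE eqxx !orbT.
  have r0 : r = 0%N by rewrite /r ht.
  exfalso; move: hu0; apply/negP; rewrite negbK; apply/eqP.
  have hU : U = 0 by rewrite /U r0 big_ord0.
  have hR : R = 0 by move: hT0; rewrite hU hS add0r addr0.
  case hc: (tg u0) => [|[|c]].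
  - have e := hmid u0 (etrans hc (esym r0)); rewrite hR subr0 mu2 in e.
    have : (al r)%:R * f u0 = 0.
      by rewrite -[_ * f u0](addrK ((al r.+1)%:R * f u0)) -mulrDl -e subrr.
    by move/eqP; rewrite mulf_eq0 pnatr_eq0 eqn0Ngt ha0 /= => /eqP.
  - by apply: hz1; rewrite hc r0.
  - by apply: hsupp; rewrite hc r0.
have hR : R = 0.
  by move/eqP: h2'; rewrite mulf_eq0 subr_eq0 (negbTE mu2) => /eqP.
case: (boolP [exists u, (tg u == r) && (f u != 0)]).
  move=> /existsP [u /andP[/eqP hu hfu]].
  have emu : mu = ((al r)%:R + (al r.+1)%:R).
    by apply: (mulIf hfu); rewrite hmid // hR subr0.
  have ha : (1 < al r)%N.
    rewrite ltn_neqAle ha0 andbT; apply/negP => /eqP e.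
    by move: hfu; rewrite -single_block hu -?e // -/R hR eqxx.
  case: (posnP t) => ht.
    by move: mu1; rewrite emu !nnS /r ht /= /nn big_ord0 add0n natrD eqxx.
  by rewrite ha emu natrD eqxx !orbT.
move=> hnone0.
have hz0 u : tg u = r -> f u = 0.
  move=> hu; apply/eqP; apply: contraNT hnone0 => hfu.
  by apply/existsP; exists u; rewrite hu eqxx.
apply/orP; right; apply/orP; right; apply/orP; right; apply/orP; right.
apply: (IH _ f) => [||u hu|]; first by apply: leq_trans hk; rewrite ltnW.
- move=> u; rewrite leq_eqVlt => /orP[/eqP hu|]; first by apply: hz0.
  rewrite leq_eqVlt => /orP[/eqP hu|hu]; first by apply: hz1.
  by apply: hsupp.
- have := heq u (ltn_trans hu (ltn_trans (ltnSn _) (ltnSn _))).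
  rewrite L_low // -/S hS subr0 => e.
  by rewrite mulrBl -e addrK.
exists u0 => //.
Qed.


Lemma check_eig r f mu : ~~ odd r ->
 (forall u, (tg u < r)%N -> Lr r f u + (al r.+1)%:R * f u - F f r.+1 = mu * f u) ->
 (forall u, tg u = r -> ((al r)%:R + (al r.+1)%:R) * f u - F f r - F f r.+1 = mu * f u) ->
 (forall u, tg u = r.+1 -> (nn r.+1)%:R * f u - (\sum_(b < r) F f b + F f r) = mu * f u) ->
 forall u, (tg u < r.+2)%N -> Lr r.+2 f u = mu * f u.
Proof.
move=> hr h0 h1 h2 u hu.
case: (ltngtP (tg u) r) => hc.
- by rewrite L_low // h0.
- have e : tg u = r.+1 by apply/eqP; rewrite eqn_leq hc -ltnS hu.
  by rewrite L_top // big_ord_recr h2.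
- by rewrite L_mid // h1.
Qed.

Lemma F_const f b c : (forall u, tg u = b -> f u = c) -> F f b = (al b)%:R * c.
Proof.
move=> h; rewrite -sum_block_const /F; apply: eq_bigr => w /eqP; exact: h.
Qed.

Lemma sumF_const f r c : (forall u, (tg u < r)%N -> f u = c) ->
  \sum_(b < r) F f b = (nn r)%:R * c.
Proof.
move=> h; rewrite /nn natr_sum mulr_suml; apply: eq_bigr => b _.
by apply: F_const => u hu; apply: h; rewrite hu.
Qed.

Lemma Lr_const f r c : (forall u, (tg u < r)%N -> f u = c) ->
  forall u, (tg u < r)%N -> Lr r f u = 0.
Proof.
move=> h u hu; apply: big1 => b _.
have -> : F f b = (al b)%:R * c by apply: F_const => w hw; apply: h; rewrite hw.
by rewrite h // subrr mulr0.
Qed.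

Lemma sum_ind (P : pred V) x : \sum_(w | P w) ((w == x)%:R : algC) = (P x)%:R.
Proof.
rewrite big_mkcond (bigD1 x) //= eqxx big1 ?addr0 => [|w hw]; first by case: (P x).
by rewrite (negbTE hw); case: (P w).
Qed.

Lemma Lr_zero f r u : (forall b, F f b = 0) -> f u = 0 -> Lr r f u = 0.
Proof. by move=> hF hu; apply: big1 => b _; rewrite hF hu mulr0 subrr mulr0. Qed.

Lemma two_vert b : (1 < al b)%N -> exists u1 u2 : V, [/\ tg u1 = b, tg u2 = b & u1 != u2].
Proof.
move=> h; have hb : (b < k)%N by case: (ltnP b k) => // hb; rewrite al_out in h.
pose j := Ordinal hb; have hj : (1 < alpha j)%N by rewrite -alE.
exists (Tagged (fun i => 'I_(alpha i)) (Ordinal (ltnW hj))).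
exists (Tagged (fun i => 'I_(alpha i)) (Ordinal hj)); split => //.
by rewrite eq_Tagged.
Qed.

Lemma evec b : (1 < al b)%N -> exists f : V -> algC,
  [/\ (forall b', F f b' = 0), (forall u, tg u != b -> f u = 0),
      (exists u, f u != 0) & forall u, tg u = b -> forall r, (b < r)%N ->
        Lr r f u = (\sum_(b' < r) ((cc b b') * al b')%:R) * f u].
Proof.
move=> /two_vert [u1 [u2 [h1 h2 h12]]].
exists (fun u => (u == u1)%:R - (u == u2)%:R); split.
- by move=> b'; rewrite /F sumrB !sum_ind h1 h2 subrr.
- by move=> u hu; rewrite (introF eqP) ?(introF eqP) ?subrr // => e; move: hu; rewrite e ?h1 ?h2 eqxx.
- by exists u1; rewrite eqxx (negbTE h12) subr0 oner_neq0.
move=> u hu r hr; rewrite /Lr mulr_suml; apply: eq_bigr => b' _.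
rewrite /F sumrB !sum_ind h1 h2 subrr subr0 hu natrM mulrA.
by case: (cc b b').
Qed.

Lemma suff t : (t.*2 <= k)%N -> forall mu, mu \in Sc t -> exists f : V -> algC,
  [/\ (forall u, (t.*2 <= tg u)%N -> f u = 0),
      (forall u, (tg u < t.*2)%N -> Lr t.*2 f u = mu * f u),
      (exists u, f u != 0) & (mu != 0 -> \sum_(b < t.*2) F f b = 0)].
Proof.
elim: t => [|t IH] hk mu; first by rewrite /Sc /= in_nil.
have hr : ~~ odd t.*2 by rewrite odd_double.
rewrite in_Sc_step doubleS; rewrite doubleS in hk.
set r := t.*2 in hk hr *.
have ha1 : (0 < al r.+1)%N by apply: al_pos.
have ha0 : (0 < al r)%N by apply: al_pos; apply: ltnW.
have [u0 hu0] : exists u : V, tg u = 0%N by apply: vert_ex; apply: leq_ltn_trans hk.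
have lt2 : forall u, (tg u < r)%N -> (tg u < r.+2)%N.
  by move=> u hu; apply: (ltn_trans hu); apply: ltn_trans (ltnSn _) (ltnSn _).
case/orP => [/eqP ->|].
  exists (fun u => if (tg u < r.+2)%N then 1 else 0); split.
  - by move=> u hu; rewrite ltnNge hu.
  - move=> u hu; rewrite mul0r; apply: (Lr_const (c := 1)) => // w hw; by rewrite hw.
  - by exists u0; rewrite hu0 oner_neq0.
  - by rewrite eqxx.
case/orP => [/eqP ->|].
  pose f : V -> algC := fun u => if (tg u <= r)%N then (al r.+1)%:R
                      else if tg u == r.+1 then - (nn r.+1)%:R else 0.
  have fS : F f r.+1 = - (al r.+1)%:R * (nn r.+1)%:R.
    rewrite (@F_const f r.+1 (- (nn r.+1)%:R)); first by rewrite mulrN mulNr.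
    by move=> u hu; rewrite /f hu ltnn eqxx.
  have fR : F f r = (al r)%:R * (al r.+1)%:R.
    by rewrite (@F_const f r (al r.+1)%:R) // => u hu; rewrite /f hu leqnn.
  have fU : \sum_(b < r) F f b = (nn r)%:R * (al r.+1)%:R.
    by apply: sumF_const => u hu; rewrite /f ltnW.
  exists f; split.
  - by move=> u hu; rewrite /f leqNgt (ltn_trans (ltnSn _) hu) gtn_eqF.
  - apply: check_eig => // u hu.
    + rewrite (Lr_const (c := (al r.+1)%:R)) // => [|w hw]; last by rewrite /f ltnW.
      by rewrite /f ltnW // fS !nnS !natrD; ring.
    + by rewrite /f hu leqnn fR fS !nnS !natrD; ring.
    + by rewrite /f hu ltnn eqxx fU fR !nnS !natrD; ring.
  - by exists u0; rewrite /f hu0 /= pnatr_eq0 -lt0n ha1.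
  - move=> _; rewrite !big_ord_recr /= fU fR fS !nnS !natrD; ring.
case/orP => [/andP[ha /eqP ->]|].
  have [f [hF hz hnz _]] := evec ha.
  exists f; split.
  - by move=> u hu; apply: hz; rewrite gtn_eqF // (ltn_trans (ltnSn _) hu).
  - apply: check_eig => // u hu.
    + have fu : f u = 0 by apply: hz; rewrite ltn_eqF // ltnW.
      by rewrite Lr_zero // hF fu; ring.
    + have fu : f u = 0 by apply: hz; rewrite hu ltn_eqF.
      by rewrite !hF fu; ring.
    + by rewrite hF big1 ?addr0 ?subr0 // => b _; apply: hF.
  - exact: hnz.
  - by move=> _; apply: big1 => b _; apply: hF.
case/orP => [/and3P[ht ha /eqP ->]|].
  have [f [hF hz hnz _]] := evec ha.
  exists f; split.
  - by move=> u hu; apply: hz; rewrite gtn_eqF // (ltn_trans _ hu) // ltn_trans (ltnSn _) (ltnSn _).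
  - apply: check_eig => // u hu.
    + have fu : f u = 0 by apply: hz; rewrite ltn_eqF.
      by rewrite Lr_zero // hF fu; ring.
    + by rewrite !hF natrD !subr0.
    + have fu : f u = 0 by apply: hz; rewrite hu gtn_eqF.
      by rewrite hF big1 ?fu ?mulr0 ?addr0 ?subr0 // => b _; apply: hF.
  - exact: hnz.
  - by move=> _; apply: big1 => b _; apply: hF.
move=> hin.
have hk' : (r <= k)%N by apply: leq_trans hk; rewrite ltnW.
have [g [gs ge gnz gsum]] := IH hk' _ hin.
have [m0|m0] := eqVneq (mu - (al r.+1)%:R) 0.
  have ht : (0 < t)%N by move: hin; case: (t) => //; rewrite /Sc /= in_nil.
  have emu : mu = (al r.+1)%:R by apply/eqP; rewrite -subr_eq0 m0.
  pose f : V -> algC := fun u => if (tg u < r)%N then (al r)%:R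
                      else if tg u == r then - (nn r)%:R else 0.
  have fS : F f r.+1 = 0.
    by apply: F_zero => u hu; rewrite /f hu ltnNge leqnSn /= gtn_eqF.
  have fR : F f r = - (al r)%:R * (nn r)%:R.
    rewrite (@F_const f r (- (nn r)%:R)); first by rewrite mulrN mulNr.
    by move=> u hu; rewrite /f hu ltnn eqxx.
  have fU : \sum_(b < r) F f b = (nn r)%:R * (al r)%:R.
    by apply: sumF_const => u hu; rewrite /f hu.
  have r0 : (0 < r)%N by rewrite /r double_gt0.
  exists f; split.
  - move=> u hu; rewrite /f ltnNge (leq_trans (leqnSn _) (ltnW hu)) /=.
    by rewrite gtn_eqF // (ltn_trans (ltnSn _) hu).
  - apply: check_eig => // u hu.
    + rewrite (Lr_const (c := (al r)%:R)) // => [|w hw]; last by rewrite /f hw.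
      by rewrite /f hu fS emu; ring.
    + by rewrite /f hu ltnn eqxx fR fS emu; ring.
    + by rewrite /f hu ltnNge leqnSn /= gtn_eqF // fU fR; ring.
  - by exists u0; rewrite /f hu0 r0 pnatr_eq0 -lt0n ha0.
  - move=> _; rewrite !big_ord_recr /= fU fR fS; ring.
have gr u : (r <= tg u)%N -> g u = 0 by apply: gs.
have gR : F g r = 0 by apply: F_zero => u hu; apply: gr; rewrite hu.
have gS : F g r.+1 = 0 by apply: F_zero => u hu; apply: gr; rewrite hu leqnSn.
exists g; split.
- by move=> u hu; apply: gr; apply: leq_trans hu; rewrite ltnW.
- apply: check_eig => // u hu.
  + by rewrite ge // gS subr0 -mulrDl subrK.
  + by rewrite !gr ?hu // !mulr0 gR gS !subr0.
  + by rewrite !gr ?hu // !mulr0 gR gsum // addr0 subr0.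
- exact: gnz.
- by move=> _; rewrite !big_ord_recr /= gR gS gsum // !addr0.
Qed.

Lemma size_cl_S t : (size (cl t.+1) <= 3 + (0 < t) + size (cl t))%N.
Proof.
rewrite /= !size_cat size_map.
case: ifP => _; case: (0 < t)%N; rewrite /= ?andbF; try case: ifP => _ /=; lia.
Qed.

Lemma size_cl t : (size (cl t.+1) <= 4 * t.+1 - 1)%N.
Proof.
elim: t => [|t IH]; first by have := size_cl_S 0.
have := size_cl_S t.+1; lia.
Qed.

Fixpoint Qf (t : nat) : seq nat :=
  if t is t'.+1 then [:: 0%N; nn t'.*2.+2] ++ map (addn (al t'.*2.+1)) (Qf t') else [::].

Lemma Qf_sub t : {subset Qf t <= cl t}.
Proof.
elim: t => [|t IH] x //=; rewrite !inE => /orP[->//|/orP[->|]]; first by rewrite orbT.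
move/mapP => [y hy ->]; rewrite !mem_cat; apply/orP; right; apply/orP; right.
apply/orP; right; apply/orP; right. by apply/mapP; exists y => //; apply: IH.
Qed.

Lemma Qf_prop t : (t.*2 <= k)%N ->
  [/\ uniq (Qf t), size (Qf t) = t.*2 & forall x, x \in Qf t -> (x <= nn t.*2)%N].
Proof.
elim: t => [|t IH] hk; first by [].
rewrite doubleS in hk.
have [IHu IHs IHb] := IH (leq_trans (leq_trans (leqnSn _) (leqnSn _)) hk).
have ha1 : (0 < al t.*2.+1)%N by apply: al_pos.
have ha0 : (0 < al t.*2)%N by apply: al_pos; apply: ltnW.
have hn : (0 < nn t.*2.+2)%N by rewrite !nnS; lia.
split.
- rewrite /= !inE negb_or eq_sym -lt0n hn /=; apply/and3P; split.
  + by apply/mapP => [[y hy e]]; lia.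
  + apply/mapP => [[y hy e]]; have := IHb _ hy; move: e; rewrite !nnS; lia.
  + by rewrite map_inj_uniq // => x y /addnI.
- by rewrite /= size_map IHs doubleS.
- move=> x; rewrite doubleS /= !inE => /orP[/eqP->//|/orP[/eqP->//|/mapP[y hy ->]]].
  by have := IHb _ hy; rewrite !nnS; lia.
Qed.
End S.

Theorem theorem3p1 (k : nat) (alpha : 'I_k -> nat) :
  (2 <= k)%N -> ~~ odd k -> (forall i, (0 < alpha i)%N) ->
  exists m : nat,
    num_distinct_eigenvalues (laplacian (@Cadj k alpha)) m /\
    (k <= m <= 2 * k - 1)%N.
Proof.
move=> hk2 hodd apos.
set t := k./2.
have ht : t.*2 = k by rewrite /t -[in RHS](odd_double_half k) (negbTE hodd).
have hk : (t.*2 <= k)%N by rewrite ht.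
pose s : seq algC := [seq (x%:R : algC) | x <- undup (cl alpha t)].
have memS a : (a \in s) = (a \in Sc alpha t).
  by apply/mapP/mapP => [[x hx ->]|[x hx ->]]; exists x; rewrite ?mem_undup in hx *.
exists (size s); split.
  exists s; split => //.
  - rewrite map_inj_uniq ?undup_uniq // => x y /eqP; rewrite eqr_nat => /eqP.
    done.
  - move=> a; rewrite memS; apply/idP/idP => h.
      move/(eigE alpha): h => [f [hnz heq]].
      apply: (@necess k alpha apos t hk f a) => // u; first by rewrite ht leqNgt ltn_ord.
      by rewrite ht => _; apply: heq.
    have [f [_ heq hnz _]] := suff apos hk h.
    rewrite ht in heq; apply/(eigE alpha); exists f; split => // u; apply: heq.
    by rewrite /tg ltn_ord.
have [hu hs _] := Qf_prop apos hk.
rewrite size_map; apply/andP; split.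
  rewrite -[X in (X <= _)%N]ht -hs; apply: uniq_leq_size => // x hx.
  by rewrite mem_undup; apply: Qf_sub.
have t0 : (0 < t)%N by move: hk2; rewrite -ht; case: (t).
apply: leq_trans (size_undup _) _.
case: (t) t0 ht => // t' _ ht'.
by apply: leq_trans (size_cl _ _) _; rewrite -ht'; lia.
Qed.
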